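(* Let weights $a_0,\dots,a_n>0$ be given, let $\omega\in\mathbb{C}[x_0,\dots,x_n]$ be weighted homogeneous of degree $d$ (with $\deg x_i=a_i$) having $0$ as its unique critical point, and let $t=\gcd(d,\sum_i a_i)$. Assume $a_i\le d/2$ for all $i$, and let $I=\{i\in\{0,\dots,n\}: a_i=1\}$. If $|I|>\frac{2t}{d-2}$, then $\mathrm{Jac}(\omega_g)_{t-k_g-\frac{d\,\mathrm{rk}W_g}{2}}=0$ for all $g\in\mu_d\setminus\{1\}$.
   Context: $\mu_d\subset\mathbb{C}^*$ is the group of $d$-th roots of unity. For $g\in\mu_d$ let $I_g=\{i: g^{a_i}\ne1\}$, $\mathrm{rk}W_g=|I_g|$, $k_g=-\sum_{i\in I_g}a_i$, and $\omega_g$ the image of $\omega$ in $\mathbb{C}[x_0,\dots,x_n]/(x_i)_{i\in I_g}$. $\mathrm{Jac}(\omega_g)$ denotes the Jacobian ring of $\omega_g$ (quotient of the polynomial ring in the variables $x_i$, $i\notin I_g$, by the partial derivatives of $\omega_g$), graded by $\deg x_i=a_i$; its pieces in negative degree are zero. *)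

(* Defs.v *)
From mathcomp Require Import all_boot all_algebra.
From mathcomp Require Import Rstruct complex.
From mathcomp Require Import mpoly.

Set Implicit Arguments.
Unset Strict Implicit.
Unset Printing Implicit Defensive.

Import GRing.Theory Num.Theory.
Local Open Scope ring_scope.

Definition CC : numClosedFieldType := (Rdefinitions.R)[i].

Definition wdeg (k : nat) (a : 'I_k -> nat) (m : 'X_{1..k}) : nat :=
  (\sum_(i < k) a i * m i)%N.

Definition wt_homog (k : nat) (a : 'I_k -> nat) (d : nat) (p : {mpoly CC[k]}) : Prop :=
  forall m, m \in msupp p -> wdeg a m = d.

Definition critical_point (k : nat) (p : {mpoly CC[k]}) (x : 'I_k -> CC) : Prop :=
  forall i : 'I_k, (mderiv i p).@[x] = 0.

Definition unique_crit_zero (k : nat) (p : {mpoly CC[k]}) : Prop :=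
  forall x : 'I_k -> CC, critical_point p x <-> (forall i, x i = 0).

Definition Ig (k : nat) (a : 'I_k -> nat) (g : CC) : {set 'I_k} :=
  [set i | g ^+ a i != 1].

Definition rkW (k : nat) (a : 'I_k -> nat) (g : CC) : nat := #|Ig a g|.

Definition kg (k : nat) (a : 'I_k -> nat) (g : CC) : int :=
  - ((\sum_(i in Ig a g) a i)%N)%:Z.

(* omega_g: image of omega modulo (x_i)_{i in I_g}, i.e. omega with x_i := 0
   for i in I_g, viewed as a polynomial in the remaining variables. *)
Definition omega_g (k : nat) (a : 'I_k -> nat) (g : CC) (w : {mpoly CC[k]})
  : {mpoly CC[k]} :=
  comp_mpoly [tuple (if i \in Ig a g then 0 else 'X_i) | i < k] w.

Definition vars_outside (k : nat) (J : {set 'I_k}) (p : {mpoly CC[k]}) : Prop :=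
  forall m, m \in msupp p -> forall i, i \in J -> m i = 0%N.

(* The graded piece of degree e (e rational; pieces in non-integral or negative
   degree are zero) of Jac(w) = CC[x_i, i notin J] / (d w / d x_j, j notin J)
   is zero: every weighted homogeneous polynomial of degree e in the variables
   x_i, i notin J, lies in the Jacobian ideal of w (in that polynomial ring). *)
Definition jac_piece_zero (k : nat) (a : 'I_k -> nat) (J : {set 'I_k})
  (w : {mpoly CC[k]}) (e : rat) : Prop :=
  forall p : {mpoly CC[k]},
    vars_outside J p ->
    (forall m, m \in msupp p -> (wdeg a m)%:R = e) ->
    exists c : 'I_k -> {mpoly CC[k]},
      (forall j, vars_outside J (c j)) /\
      p = \sum_(j < k | j \notin J) c j * mderiv j w.

(* Main.v *)
Require Import Defs.
From mathcomp Require Import all_boot all_algebra.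
From mathcomp Require Import Rstruct complex.
From mathcomp Require Import mpoly.
From mathcomp Require Import lra.

Import GRing.Theory Num.Theory.
Local Open Scope ring_scope.

Lemma mul0_mp n (q : {mpoly CC[n]}) : 0 * q = 0.
Proof. by rewrite mul0r. Qed.

Theorem lemma3p9 (n : nat) (a : 'I_n.+1 -> nat) (d : nat) (w : {mpoly CC[n.+1]}) :
  (forall i, 0 < a i)%N ->
  wt_homog a d w ->
  unique_crit_zero w ->
  let t := gcdn d (\sum_(i < n.+1) a i) in
  (forall i, 2 * a i <= d)%N ->
  let I := [set i : 'I_n.+1 | a i == 1%N] in
  (* |I| > 2t/(d-2), written without division *)
  (2 * t < #|I| * (d - 2))%N ->
  forall g : CC, g ^+ d = 1 -> g != 1 ->
    jac_piece_zero a (Ig a g) (omega_g a g w)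
      (t%:R - (kg a g)%:~R - (d * rkW a g)%:R / 2).
Proof.
move=> _ _ _ t had I hI g _ g1.
set S := Ig a g.
have IS : I \subset S.
  apply/subsetP => i; rewrite /I /S /Ig !inE => /eqP ->; by rewrite expr1.
have key : (2 * t + 2 * \sum_(i in S) a i < d * #|S|)%N.
  have E : (d * #|S| = \sum_(i in S) (d - 2 * a i) + 2 * \sum_(i in S) a i)%N.
    rewrite mulnC -sum_nat_const big_distrr -big_split /=.
    by apply: eq_bigr => i _; rewrite subnK.
  have L : (#|I| * (d - 2) <= \sum_(i in S) (d - 2 * a i))%N.
    rewrite (big_setID I) /= (setIidPr IS).
    apply: leq_trans (leq_addr _ _).
    rewrite -sum_nat_const; apply: leq_sum => i; rewrite /I inE => /eqP ->.
    by rewrite muln1.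
  rewrite E ltn_add2r; exact: leq_trans hI L.
move=> p _ hp.
exists (fun _ => 0); split.
  by move=> j m; rewrite msupp0.
rewrite big1 => [|i _]; last exact: mul0_mp.
rewrite (mpolyE p) big1_seq // => m /andP [_ hm].
exfalso.
have := hp m hm.
have : ((2 * t + 2 * \sum_(i in S) a i)%:R < (d * #|S|)%:R :> rat) by rewrite ltr_nat.
rewrite /kg /rkW -/S !natrD !natrM.
have -> : ((- ((\sum_(i in S) a i)%N)%:Z)%:~R : rat) = - (\sum_(i in S) a i)%N%:R.
  by rewrite rmorphN.
have : (0 : rat) <= (wdeg a m)%:R by [].
lra.
Qed.
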